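(* For every integer $n \ge 0$, define $\xi : \mathrm{SYT}(\theta^{(n)}) \to \mathcal{P}_n$ as follows. For $T \in \mathrm{SYT}(\theta^{(n)})$, let $H$ be the entry of $T$ in the heart, and let $\xi(T) = p_1 p_2 \cdots p_{2n+2}$, where for each $1 \le i \le 2n+2$: \[ p_i = \begin{cases} \mathsf{E}, & \text{if } i+1 \in \mathrm{arm}(T) \text{ and } i+2 < H;\\ \mathsf{N}, & \text{if } i+1 \in \mathrm{leg}(T) \text{ and } i+2 < H;\\ \mathsf{S}, & \text{if } i+1 \in \mathrm{arm}(T) \text{ and } i+2 = H;\\ \mathsf{W}, & \text{if } i+1 \in \mathrm{leg}(T) \text{ and } i+2 = H;\\ \mathsf{E}, & \text{if } i+2 \in \mathrm{arm}(T) \text{ and } H < i+2;\\ \mathsf{N}, & \text{if } i+2 \in \mathrm{leg}(T) \text{ and } H < i+2. \end{cases} \] Then $\xi(T)$ lies in $\mathcal{P}_n$ for every $T$, and $\xi$ is a bijection.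
   Context: For $n \ge 0$, $\theta^{(n)}$ denotes the integer partition $(n+2, 2, 1^n)$ of $2n+4$ (rows of lengths $n+2$, $2$, and then $n$ rows of length $1$), identified with its Young diagram in English convention (the row of length $n+2$ on top). The \emph{arm} of $\theta^{(n)}$ is its first row (all $n+2$ boxes, including the top-left corner box), the \emph{leg} is its first column (all $n+2$ boxes, including the top-left corner box), and the \emph{heart} is the unique box lying in neither the first row nor the first column (the second box of the second row). $\mathrm{SYT}(\theta^{(n)})$ is the set of standard Young tableaux of shape $\theta^{(n)}$: bijective fillings of the boxes with $1, \dots, 2n+4$ increasing left to right along rows and top to bottom down columns. For a tableau $T$, $\mathrm{arm}(T)$, $\mathrm{leg}(T)$, $\mathrm{heart}(T)$ denote the sets of entries of $T$ in the arm, leg, and heart respectively; ''$k \in \mathrm{arm}(T)$'' means the entry $k$ lies in the arm. $\mathcal{P}_n$ is the set of lattice paths in $\mathbb{Z}^2$ from $(0,0)$ to $(n,n)$ of exactly $2n+2$ steps, each step one of $\mathsf{N} = (0,1)$, $\mathsf{S} = (0,-1)$, $\mathsf{E} = (1,0)$, $\mathsf{W} = (-1,0)$, such that every vertex of the path lies in the closed first quadrant $\{(x,y) : x \ge 0, y \ge 0\}$. Such a path is identified with its word $p_1 p_2 \cdots p_{2n+2}$ of steps in the alphabet $\{\mathsf{N},\mathsf{S},\mathsf{E},\mathsf{W}\}$. *)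

(* Defs.v *)
From mathcomp Require Import all_boot all_order all_algebra.
Set Implicit Arguments. Unset Strict Implicit. Unset Printing Implicit Defensive.
Import Order.TTheory GRing.Theory Num.Theory.

(* A tableau is the list of its rows (English convention, top row first). *)
Definition tableau := seq (seq nat).

Definition theta (n : nat) : seq nat := n.+2 :: 2 :: nseq n 1.

Definition is_SYT (sh : seq nat) (t : tableau) : Prop :=
  [/\ map size t = sh,
      perm_eq (flatten t) (iota 1 (sumn sh)),
      all (fun r => sorted ltn r) t &
      forall r c, r.+1 < size t -> c < size (nth [::] t r.+1) ->
        nth 0 (nth [::] t r) c < nth 0 (nth [::] t r.+1) c].

Definition arm (t : tableau) : seq nat := nth [::] t 0.
Definition leg (t : tableau) : seq nat := [seq nth 0 r 0 | r <- t].
Definition heart (t : tableau) : nat := nth 0 (nth [::] t 1) 1.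

Inductive step := stN | stS | stE | stW.

Definition move (v : int * int) (s : step) : int * int :=
  match s with
  | stN => (v.1, v.2 + 1)%R
  | stS => (v.1, v.2 - 1)%R
  | stE => (v.1 + 1, v.2)%R
  | stW => (v.1 - 1, v.2)%R
  end.

Definition vertices (p : seq step) : seq (int * int) :=
  (0, 0)%R :: scanl move (0, 0)%R p.

Definition in_P (n : nat) (p : seq step) : Prop :=
  [/\ size p = (2 * n).+2,
      all (fun v : int * int => (0 <= v.1)%R && (0 <= v.2)%R) (vertices p) &
      foldl move (0, 0)%R p = ((n : int), (n : int))].

(* the step p_i of xi(T); the final default stE is never reached on SYTs *)
Definition xi_step (t : tableau) (i : nat) : step :=
  let H := heart t in
  if (i.+1 \in arm t) && (i.+2 < H) then stE
  else if (i.+1 \in leg t) && (i.+2 < H) then stN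
  else if (i.+1 \in arm t) && (i.+2 == H) then stS
  else if (i.+1 \in leg t) && (i.+2 == H) then stW
  else if (i.+2 \in arm t) && (H < i.+2) then stE
  else if (i.+2 \in leg t) && (H < i.+2) then stN
  else stE.

Definition xi (n : nat) (t : tableau) : seq step :=
  [seq xi_step t i | i <- iota 1 (2 * n).+2].

(* Main.v *)
Require Import Defs.
From mathcomp Require Import all_boot all_order all_algebra.
From mathcomp Require Import zify.
Set Implicit Arguments. Unset Strict Implicit. Unset Printing Implicit Defensive.

Definition isE (s : step) := if s is stE then true else false.
Definition isN (s : step) := if s is stN then true else false.
Definition isS (s : step) := if s is stS then true else false.
Definition isW (s : step) := if s is stW then true else false.
Definition isBack (s : step) := match s with stS | stW => true | _ => false end.
Definition armstep (s : step) := match s with stE | stS => true | _ => false end.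

Lemma foldl_move v q : foldl move v q =
  (v.1 + (count isE q)%:Z - (count isW q)%:Z, v.2 + (count isN q)%:Z - (count isS q)%:Z)%R.
Proof.
elim: q v => [|a q IH] v /=; first by case: v => x y /=; congr pair; lia.
rewrite IH; case: a => /=; congr pair; lia.
Qed.

Lemma counts q : [/\ count armstep q = count isE q + count isS q,
  count isBack q = count isS q + count isW q &
  size q = count isE q + count isN q + count isS q + count isW q].
Proof.
elim: q => [|a q [h1 h2 h3]] //=; case: a => /=; split; lia.
Qed.
Lemma sorted_nth (s : seq nat) :
  (forall i, i.+1 < size s -> nth 0 s i < nth 0 s i.+1) -> sorted ltn s.
Proof.
elim: s => [|x s IH] //=; case: s IH => [|y s] IH H //=.
rewrite (H 0) //=; apply: IH => i Hi; exact: (H i.+1 Hi).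
Qed.

Lemma flatten1 (L : seq nat) : flatten (map (fun x => [:: x]) L) = L.
Proof. by elim: L => //= x L ->. Qed.

Lemma sorted_head (x : nat) s y : sorted ltn (x :: s) -> y \in x :: s -> x <= y.
Proof.
move=> /= /(order_path_min ltn_trans) /allP H; rewrite inE => /orP[/eqP -> //|/H].
exact: ltnW.
Qed.

Lemma SYT_facts n r0 b h L :
 is_SYT (theta n) (r0 :: [:: b; h] :: map (fun x => [:: x]) L) -> size r0 = n.+2 -> size L = n ->
 sorted ltn r0 /\ sorted ltn (b :: L) /\ nth 0 r0 0 = 1 /\
     uniq (r0 ++ b :: h :: L) /\
     (forall j, (j \in r0 ++ b :: h :: L) = (0 < j <= (2*n).+4)) /\
     nth 0 r0 1 < h /\ nth 0 r0 0 < b.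
Proof.
case=> Hsz Hperm Hsort Hcol Hs0 HL.
have sumT: sumn (theta n) = (2*n).+4 by rewrite /theta /= sumn_nseq; lia.
have fl: flatten (r0 :: [:: b; h] :: map (fun x => [:: x]) L) = r0 ++ b :: h :: L.
  by rewrite /= flatten1.
have Hu : uniq (r0 ++ b :: h :: L) by rewrite -fl (perm_uniq Hperm) iota_uniq.
have Hmem : forall j, (j \in r0 ++ b :: h :: L) = (0 < j <= (2*n).+4).
  by move=> j; rewrite -fl (perm_mem Hperm) mem_iota sumT; lia.
have Sr0 : sorted ltn r0 by move: Hsort => /= /and3P[].
have c00 : nth 0 r0 0 < b by apply: (Hcol 0 0) => //=; rewrite size_map; lia.
have c01 : nth 0 r0 1 < h by apply: (Hcol 0 1) => //=; rewrite size_map; lia.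
have SbL : sorted ltn (b :: L).
  apply: sorted_nth => -[|i] /= Hi.
    have := Hcol 1 0; rewrite /= size_map (nth_map 0); last by lia.
    by apply => //=; lia.
  have := Hcol i.+2 0; rewrite /= size_map (nth_map 0); last by lia.
  rewrite (nth_map 0); last by lia. by apply => //=; rewrite ?size_map ?(nth_map 0) /=; lia.
have m1 : 1 \in r0 ++ b :: h :: L by rewrite Hmem; lia.
have r0m : forall x, x \in r0 -> 0 < x by move=> x Hx; have := Hmem x; rewrite mem_cat Hx /=; lia.
case: r0 Hs0 Sr0 c00 c01 Hu Hmem m1 r0m {fl Hperm Hsort Hcol Hsz} => [|x r0] //= Hs0 Sr0 c00 c01 Hu Hmem m1 r0m.
have x1 : x = 1.
  have x0 : 0 < x by apply: r0m; rewrite inE eqxx.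
  suff: x <= 1 by lia.
  move: m1; rewrite in_cons mem_cat !in_cons => /orP[/eqP<-//|/orP[H1|/orP[/eqP Eb|/orP[/eqP Eh|HL1]]]].
  - by apply: (sorted_head Sr0); rewrite in_cons H1 orbT.
  - lia.
  - have : 0 < nth 0 r0 0.
      by apply: r0m; rewrite in_cons mem_nth ?orbT // -ltnS Hs0.
    lia.
  - have : 1 \in b :: L by rewrite in_cons HL1 orbT.
    move=> /(sorted_head SbL); lia.
by subst x; do !split.
Qed.
Definition eH (H k : nat) := if k.+3 <= H then k.+2 else k.+3.
Definition dH (H j : nat) := if j < H then j - 2 else j - 3.

Lemma dHeH H k : dH H (eH H k) = k.
Proof. rewrite /eH; case: (leqP k.+3 H) => h1; rewrite /dH; case: ifP => h2; lia. Qed.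

Lemma eHdH H j : 2 <= H -> 2 <= j -> j != H -> eH H (dH H j) = j.
Proof. rewrite /dH => h0 h1 /eqP h2; case: (ltnP j H) => h3; rewrite /eH.
  by case: (leqP (j-2).+3 H) => h4; lia.
by case: (leqP (j-3).+3 H) => h4; lia. Qed.

Lemma eH_mono H : {homo eH H : x y / x < y}.
Proof. move=> x y; rewrite /eH; case: ifP => h1; case: ifP => h2; lia. Qed.

Lemma eH_ge2 H k : 2 <= eH H k.
Proof. rewrite /eH; case: ifP => h1; lia. Qed.

Lemma eH_neq H k : eH H k != H.
Proof. rewrite /eH; case: ifP => h1; apply/eqP; lia. Qed.

Lemma eH_le H N k : k < N -> H <= N.+2 -> eH H k <= N.+2.
Proof. rewrite /eH; case: ifP => h1; lia. Qed.

Lemma dH_lt H N j : 2 <= H -> 2 <= j -> j <= N.+2 -> H <= N.+2 -> j != H -> dH H j < N.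
Proof. rewrite /dH => h0 h1 h2 h3 /eqP h4; case: (ltnP j H) => h5; lia. Qed.

Lemma mem_eHmap H N (P : pred nat) j : 2 <= H ->
  (j \in map (eH H) (filter P (iota 0 N))) = [&& 2 <= j, j != H, dH H j < N & P (dH H j)].
Proof.
move=> H2; apply/mapP/idP.
  case=> k; rewrite mem_filter mem_iota => /andP[Pk kN] ->.
  by rewrite dHeH eH_ge2 eH_neq Pk /=; lia.
case/and4P=> h1 h2 h3 h4; exists (dH H j); last by rewrite eHdH.
by rewrite mem_filter h4 mem_iota; lia.
Qed.

Lemma sorted_eHmap H N (P : pred nat) :
  sorted ltn (1 :: map (eH H) (filter P (iota 0 N))).
Proof.
rewrite /= path_sortedE; last exact: ltn_trans.
apply/andP; split.
  by apply/allP => x /mapP [k _ ->]; have := eH_ge2 H k; lia.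
apply: (homo_sorted (eH_mono H)); apply: sorted_filter; first exact: ltn_trans.
exact: iota_ltn_sorted.
Qed.

Lemma rebuild H N (s : seq nat) : 2 <= H -> sorted ltn s -> 1 \in s -> H \notin s ->
  (forall j, j \in s -> 0 < j <= N.+2) -> H <= N.+2 ->
  s = 1 :: map (eH H) (filter (fun k => eH H k \in s) (iota 0 N)).
Proof.
move=> H2 Ss s1 Hs sr HN; apply: (irr_sorted_eq ltn_trans ltnn Ss (sorted_eHmap _ _ _)).
move=> j; rewrite in_cons mem_eHmap //.
case: (ltngtP j 1) => j1.
- have : j \notin s by apply/negP => /sr; lia.
  move/negbTE => ->; symmetry; apply/negbTE; lia.
- have j1' : (j == 1) = false by apply/eqP; lia.
  have j2 : 2 <= j by lia.
  rewrite /=; case: (eqVneq j H) => [->|jH]; first by rewrite (negbTE Hs).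
  rewrite eHdH //.
  case: (boolP (j \in s)) => js; last by rewrite !andbF.
  have := sr j js => /andP[_ jN]. by rewrite dH_lt.
- by subst j; rewrite s1.
Qed.

Definition enc H (a : pred nat) k := let b := a (eH H k) in
  if k.+3 == H then (if b then stS else stW) else (if b then stE else stN).

Lemma legL (L : seq nat) : map (fun r => nth 0 r 0) (map (fun x => [:: x]) L) = L.
Proof. by elim: L => //= x L ->. Qed.

Lemma xi_formula n r0 b h L :
  is_SYT (theta n) (r0 :: [:: b; h] :: map (fun x => [:: x]) L) -> size r0 = n.+2 -> size L = n ->
  xi n (r0 :: [:: b; h] :: map (fun x => [:: x]) L) = map (enc h (fun j => j \in r0)) (iota 0 (2*n).+2).
Proof.
move=> HT Hs0 HL.
have [Sr0 [SbL [r00 [Hu [Hmem [c01 c00]]]]]] := SYT_facts HT Hs0 HL.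
have F : forall j, 2 <= j <= (2*n).+4 -> j != h -> (j \notin r0) -> j \in b :: L.
  move=> j jr jh jr0; have := Hmem j; rewrite mem_cat (negbTE jr0) /= !in_cons (negbTE jh) /=.
  by move=> E; move: E jr => -> ; lia.
rewrite /xi; have -> : iota 1 (2*n).+2 = map (addn 1) (iota 0 (2*n).+2) by rewrite -iotaDl.
rewrite -map_comp; apply/eq_in_map => k; rewrite mem_iota => /andP[_ kN] /=.
rewrite /xi_step /heart /arm /leg /= legL add1n /enc /eH.
case: (ltngtP k.+3 h) => hk.
- case: (boolP (k.+2 \in r0)) => A //=.
  rewrite in_cons (F k.+2) ?orbT //; first [lia | apply/eqP; lia].
- case: (boolP (k.+3 \in r0)) => A /=; rewrite ?andbF ?andbT //.
  rewrite in_cons (F k.+3) ?orbT //; first [lia | apply/eqP; lia].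
- case: (boolP (k.+2 \in r0)) => A /=; rewrite ?andbF ?andbT //.
  rewrite in_cons (F k.+2) ?orbT //; first [lia | apply/eqP; lia].
Qed.

Lemma singl_decomp n (rs : seq (seq nat)) : map size rs = nseq n 1 ->
  exists L, rs = map (fun x => [:: x]) L /\ size L = n.
Proof.
elim: rs n => [|r rs IH] [|n] //=; first by move=> _; exists [::].
case=> e1 /IH [L [-> <-]]; case: r e1 => [|x [|]] //= _.
by exists (x :: L).
Qed.

Lemma SYT_decomp n T : is_SYT (theta n) T -> exists r0 b h L,
  T = r0 :: [:: b; h] :: map (fun x => [:: x]) L /\ size r0 = n.+2 /\ size L = n.
Proof.
case=> Hsz _ _ _; move: Hsz; rewrite /theta.
case: T => [|r0 [|r1 rs]] //= [e0 e1 /singl_decomp [L [-> eL]]].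
case: r1 e1 => [|b [|h [|]]] //= _.
by exists r0, b, h, L.
Qed.

Lemma find_eq (T : Type) (a : pred T) s x0 i : i < size s -> a (nth x0 s i) ->
  (forall j, j < i -> ~~ a (nth x0 s j)) -> find a s = i.
Proof.
elim: s i => [|x s IH] [|i] //= Hi Ha Hb; first by rewrite Ha.
have := Hb 0 isT => /= /negbTE ->; congr S; apply: IH => // j Hj; exact: (Hb j.+1 Hj).
Qed.

Definition Hp p := (find isBack p).+3.
Definition armlist p := 1 :: map (eH (Hp p)) (filter (fun k => armstep (nth stE p k)) (iota 0 (size p))).
Definition leglist p := 1 :: map (eH (Hp p)) (filter (fun k => ~~ armstep (nth stE p k)) (iota 0 (size p))).
Definition tab p : tableau :=
  armlist p :: [:: nth 0 (leglist p) 1; Hp p] :: map (fun x => [:: x]) (drop 2 (leglist p)).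

Lemma isBack_enc H a k : isBack (enc H a k) = (k.+3 == H).
Proof. by rewrite /enc; case: (k.+3 == H); case: (a _). Qed.
Lemma armstep_enc H a k : armstep (enc H a k) = a (eH H k).
Proof. by rewrite /enc; case: (k.+3 == H); case: (a _). Qed.

Lemma tab_xi n T : is_SYT (theta n) T -> tab (xi n T) = T.
Proof.
move=> HT; have [r0 [b [h [L [ET [Hs0 HL]]]]]] := SYT_decomp HT; subst T.
have [Sr0 [SbL [r00 [Hu [Hmem [c01 c00]]]]]] := SYT_facts HT Hs0 HL.
rewrite (xi_formula HT Hs0 HL).
set a := (fun j => j \in r0).
set p := map (enc h a) (iota 0 (2*n).+2).
have sp : size p = (2*n).+2 by rewrite size_map size_iota.
have np : forall k, k < (2*n).+2 -> nth stE p k = enc h a k.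
  by move=> k Hk; rewrite (nth_map 0) ?size_iota // nth_iota.
have h1 : nth 0 r0 1 \in r0 by rewrite mem_nth // Hs0.
have h3 : 3 <= h.
  have : 0 < nth 0 r0 1 by have := Hmem (nth 0 r0 1); rewrite mem_cat h1 /=; lia.
  have : nth 0 r0 0 < nth 0 r0 1.
    by apply: (sorted_ltn_nth ltn_trans 0 Sr0); rewrite ?inE ?Hs0.
  lia.
have hin : h \in r0 ++ [:: b, h & L] by rewrite mem_cat !in_cons eqxx /= !orbT.
have hN : h <= (2*n).+4 by move: hin; rewrite Hmem; lia.
have Hph : Hp p = h.
  rewrite /Hp (@find_eq _ _ _ stE (h - 3)); first lia.
  - by rewrite sp; lia.
  - by rewrite np ?isBack_enc; [apply/eqP; lia| lia].
  by move=> j Hj; rewrite np ?isBack_enc; [apply/eqP; lia| lia].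
have eHin : forall k, k < (2*n).+2 -> eH h k \in r0 ++ [:: b, h & L].
  move=> k Hk; rewrite Hmem; have := eH_le Hk hN; have := eH_ge2 h k; lia.
have Hleg : forall k, k < (2*n).+2 -> ~~ (eH h k \in r0) = (eH h k \in 1 :: b :: L).
  move=> k Hk; have := eHin k Hk; move: Hu; rewrite cat_uniq => /and3P[_ Hd _].
  have e1 : (eH h k == 1) = false by apply/eqP; have := eH_ge2 h k; lia.
  have e2 : (eH h k == h) = false by apply/negbTE; exact: eH_neq.
  rewrite mem_cat !in_cons e1 e2 /=.
  case: (boolP (eH h k \in r0)) => A /=.
    move=> _; apply/esym/negbTE; apply/negP => B; move/hasP: Hd; apply.
    by exists (eH h k); rewrite // !in_cons; move: B => /orP[->|->]; rewrite ?orbT.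
  done.
have Hh2 : 2 <= h by lia.
have Sleg : sorted ltn [:: 1, b & L] by rewrite /= -r00 c00.
have bnd : forall j, j \in r0 ++ [:: b, h & L] -> 0 < j <= (2*n).+2.+2.
  by move=> j; rewrite Hmem.
have Earm : armlist p = r0.
  rewrite /armlist Hph sp (rebuild (N := (2*n).+2) Hh2 Sr0) //.
  - congr cons; congr map; apply: eq_in_filter => k; rewrite mem_iota => /andP[_ Hk].
    by rewrite np // armstep_enc.
  - by rewrite -r00 mem_nth // Hs0.
  - apply/negP => A; move: Hu; rewrite cat_uniq => /and3P[_ /hasP Hd _]; apply: Hd.
    by exists h; rewrite // !in_cons eqxx /= ?orbT.
  - by move=> j Hj; apply: bnd; rewrite mem_cat Hj.
have Eleg : leglist p = [:: 1, b & L].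
  rewrite /leglist Hph sp (rebuild (N := (2*n).+2) Hh2 Sleg) //.
  - congr cons; congr map; apply: eq_in_filter => k; rewrite mem_iota => /andP[_ Hk].
    by rewrite np // armstep_enc Hleg.
  - move: Hu; rewrite cat_uniq => /and3P[_ _ /= /andP[Hb /andP[Hh _]]].
    rewrite !in_cons negb_or; apply/andP; split; first by apply/eqP; lia.
    rewrite negb_or Hh andbT; move: Hb; rewrite in_cons negb_or eq_sym => /andP[] //.
  - move=> j; rewrite in_cons => /orP[/eqP ->|Hj]; first lia.
    by apply: bnd; rewrite mem_cat !in_cons; move: Hj; rewrite in_cons => /orP[->|->]; rewrite ?orbT.
by rewrite /tab Earm Eleg Hph /= drop0.
Qed.

Lemma count_nth (a : pred step) p :
  count (fun k => a (nth stE p k)) (iota 0 (size p)) = count a p.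
Proof. by rewrite -[in RHS](mkseq_nth stE p) /mkseq count_map. Qed.

Lemma size_armlist p : size (armlist p) = (count armstep p).+1.
Proof. by rewrite /armlist /= size_map size_filter count_nth. Qed.

Lemma size_leglist p : size (leglist p) = (count (predC armstep) p).+1.
Proof. by rewrite /leglist /= size_map size_filter -(count_nth (predC armstep)). Qed.

Lemma count_iota1 c N : c < N -> count (fun k => k == c) (iota 0 N) = 1.
Proof.
move=> cN; have -> : (fun k => k == c) = pred1 c by [].
by rewrite count_uniq_mem ?iota_uniq // mem_iota; case: (0 <= c < 0 + N) / idP => //; lia.
Qed.

Lemma cnt_ge1 (a : pred step) q j : j < size q -> a (nth stE q j) -> 0 < count a q.
Proof. by move=> Hj Ha; rewrite -has_count; apply/(has_nthP stE); exists j. Qed.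

Lemma vert_take p m : all (fun v : int * int => (0 <= v.1)%R && (0 <= v.2)%R) (vertices p) ->
  m < size p -> (count isW (take m.+1 p) <= count isE (take m.+1 p)) /\
                 (count isS (take m.+1 p) <= count isN (take m.+1 p)).
Proof.
move=> /(all_nthP (0,0)%R) Hall Hm.
have := Hall m.+1; rewrite /vertices /= size_scanl nth_scanl // foldl_move /= => H.
by move: (H Hm) => /andP[h1 h2]; split; lia.
Qed.

Lemma vert_nonneg p k0 : k0 < size p -> isBack (nth stE p k0) ->
  (forall k, k < size p -> k != k0 -> ~~ isBack (nth stE p k)) ->
  (exists2 ka, ka <= k0 & armstep (nth stE p ka)) ->
  (exists2 kl, kl <= k0 & ~~ armstep (nth stE p kl)) ->
  all (fun v : int * int => (0 <= v.1)%R && (0 <= v.2)%R) (vertices p).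
Proof.
move=> Hk0 Hb Hnb [ka Hka Aa] [kl Hkl Al].
rewrite /vertices /=; apply/(all_nthP (0,0)%R) => m; rewrite size_scanl => Hm.
rewrite nth_scanl // foldl_move /=.
set q := take m.+1 p.
have sq : size q = m.+1 by rewrite size_takel.
have nq : forall j, j < m.+1 -> nth stE q j = nth stE p j by move=> j Hj; rewrite nth_take.
have [c1 c2 c3] := counts q.
suff : (count isW q <= count isE q) /\ (count isS q <= count isN q) by case=> ? ?; apply/andP; split; lia.
case: (ltnP m k0) => mk.
  have : count isBack q = 0.
    rewrite -(count_nth isBack) sq; apply/eqP; rewrite -leqn0 leqNgt -has_count; apply/hasPn => j.
    rewrite mem_iota => /andP[_ Hj]; rewrite nq //; apply: Hnb; [lia | apply/eqP; lia].
  lia.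
have cb : count isBack q = 1.
  rewrite -(count_nth isBack) sq -(@count_iota1 k0 m.+1); last lia.
  apply: eq_in_count => j; rewrite mem_iota => /andP[_ Hj]; rewrite nq //.
  case: (eqVneq j k0) => [->|jk]; first by rewrite Hb.
  by apply/negbTE/Hnb => //; lia.
case E : (nth stE p k0) Hb => // _.
- have : 0 < count isS q by apply: (@cnt_ge1 _ _ k0); rewrite ?sq ?nq ?E //; lia.
  have : 0 < count isN q.
    apply: (@cnt_ge1 _ _ kl); rewrite ?sq ?nq //; try lia.
    have nb : ~~ isBack (nth stE p kl).
      apply: Hnb; first lia. by apply/eqP => kk; move: Al; rewrite kk E.
    by move: Al nb; case: (nth stE p kl).
  lia.
- have : 0 < count isW q by apply: (@cnt_ge1 _ _ k0); rewrite ?sq ?nq ?E //; lia.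
  have : 0 < count isE q.
    apply: (@cnt_ge1 _ _ ka); rewrite ?sq ?nq //; try lia.
    have nb : ~~ isBack (nth stE p ka).
      apply: Hnb; first lia. by apply/eqP => kk; move: Aa; rewrite kk E.
    by move: Aa nb; case: (nth stE p ka).
  lia.
Qed.

Lemma SYT_bh n r0 b h L :
 is_SYT (theta n) (r0 :: [:: b; h] :: map (fun x => [:: x]) L) -> b < h.
Proof. by case=> _ _ /= /and3P[_ /andP[]]. Qed.

Lemma xi_inP n T : is_SYT (theta n) T -> in_P n (xi n T).
Proof.
move=> HT; have TX := tab_xi HT.
have [r0 [b [h [L [ET [Hs0 HL]]]]]] := SYT_decomp HT; subst T.
have [Sr0 [SbL [r00 [Hu [Hmem [c01 c00]]]]]] := SYT_facts HT Hs0 HL.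
have XF := xi_formula HT Hs0 HL.
have bh := SYT_bh HT.
move: TX XF; set p := xi n _ => TX XF.
set a := (fun j => j \in r0) in XF.
have sp : size p = (2*n).+2 by rewrite XF size_map size_iota.
have np : forall k, k < (2*n).+2 -> nth stE p k = enc h a k.
  by move=> k Hk; rewrite XF (nth_map 0) ?size_iota // nth_iota.
have h1 : nth 0 r0 1 \in r0 by rewrite mem_nth // Hs0.
have r01 : 1 < nth 0 r0 1.
  have : nth 0 r0 0 < nth 0 r0 1.
    by apply: (sorted_ltn_nth ltn_trans 0 Sr0); rewrite ?inE ?Hs0.
  lia.
have hin : h \in r0 ++ [:: b, h & L] by rewrite mem_cat !in_cons eqxx /= !orbT.
have hN : h <= (2*n).+4 by move: hin; rewrite Hmem; lia.
have cA : count armstep p = n.+1.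
  have E0 : armlist p = r0 := congr1 (fun t => nth [::] t 0) TX.
  have := size_armlist p; rewrite E0 Hs0; lia.
have cB : count isBack p = 1.
  rewrite XF count_map (@eq_count _ _ (fun k => k == h - 3)); first by apply: count_iota1; lia.
  by move=> k /=; rewrite isBack_enc; apply/eqP/eqP; lia.
have [c1 c2 c3] := counts p.
split; first by [].
- apply: (@vert_nonneg _ (h - 3)).
  + rewrite sp; lia.
  + rewrite np ?isBack_enc; [apply/eqP; lia | lia].
  + move=> k Hk /eqP kk; rewrite np ?isBack_enc; [apply/eqP; lia | lia].
  + exists (nth 0 r0 1 - 2); first lia.
    rewrite np ?armstep_enc /a /eH; last lia.
    have -> : (nth 0 r0 1 - 2).+3 <= h by lia.
    by have -> : (nth 0 r0 1 - 2).+2 = nth 0 r0 1 by lia.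
  + exists (b - 2); first lia.
    rewrite np ?armstep_enc /a /eH; last lia.
    have -> : (b - 2).+3 <= h by lia.
    have -> : (b - 2).+2 = b by lia.
    move: Hu; rewrite cat_uniq => /and3P[_ /hasPn Hd _]; apply: Hd.
    by rewrite in_cons eqxx.
- clearbody p; rewrite foldl_move /=; congr pair; lia.
Qed.

Lemma inP_facts n p : in_P n p ->
 [/\ find isBack p < size p, isBack (nth stE p (find isBack p)),
     (forall k, k < size p -> k != find isBack p -> ~~ isBack (nth stE p k)),
     count armstep p = n.+1 &
     ((exists2 ka, ka <= find isBack p & armstep (nth stE p ka)) /\
      (exists2 kl, kl <= find isBack p & ~~ armstep (nth stE p kl)))].
Proof.
case=> sp Hv Hend; have [c1 c2 c3] := counts p.
move: Hend; rewrite foldl_move /= => -[e1 e2].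
have cb : count isBack p = 1 by lia.
have cA : count armstep p = n.+1 by lia.
set k0 := find isBack p.
have hk0 : k0 < size p by rewrite /k0 -has_find has_count cb.
have bk0 : isBack (nth stE p k0) by apply: nth_find; rewrite has_count cb.
have nb : forall k, k < size p -> k != k0 -> ~~ isBack (nth stE p k).
  move=> k Hk kk; case: (ltnP k k0) => kk0; first by rewrite before_find.
  apply/negP => Bk.
  have : 0 < count isBack (take k0.+1 p).
    by apply: (@cnt_ge1 _ _ k0); rewrite ?size_takel ?nth_take //.
  have : 0 < count isBack (drop k0.+1 p).
    apply: (@cnt_ge1 _ _ (k - k0.+1)); rewrite ?size_drop ?nth_drop; first lia.
    have -> : k0.+1 + (k - k0.+1) = k by move/eqP: kk => kk; lia.
    done.
  have := cat_take_drop k0.+1 p => E.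
  move: cb; rewrite -{1}E count_cat; lia.
split => //.
have [v1 v2] := vert_take Hv hk0.
have nq : forall j, j < k0.+1 -> nth stE (take k0.+1 p) j = nth stE p j by move=> j Hj; rewrite nth_take.
have sq : size (take k0.+1 p) = k0.+1 by rewrite size_takel.
case E : (nth stE p k0) bk0 => // _.
- split; first by exists k0; rewrite ?E.
  have : 0 < count isS (take k0.+1 p) by apply: (@cnt_ge1 _ _ k0); rewrite ?sq ?nq ?E.
  move=> H1; have : 0 < count isN (take k0.+1 p) by lia.
  rewrite -has_count => /(has_nthP stE) [j]; rewrite sq => Hj; rewrite nq //.
  by move=> Hn; exists j; [lia | move: Hn; case: (nth stE p j)].
- split; last by exists k0; rewrite ?E.
  have : 0 < count isW (take k0.+1 p) by apply: (@cnt_ge1 _ _ k0); rewrite ?sq ?nq ?E.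
  move=> H1; have : 0 < count isE (take k0.+1 p) by lia.
  rewrite -has_count => /(has_nthP stE) [j]; rewrite sq => Hj; rewrite nq //.
  by move=> Hn; exists j; [lia | move: Hn; case: (nth stE p j)].
Qed.

Lemma map_size1 (D : seq nat) : map size (map (fun x => [:: x]) D) = nseq (size D) 1.
Proof. by elim: D => //= x D ->. Qed.

Lemma surj n p : in_P n p -> is_SYT (theta n) (tab p) /\ xi n (tab p) = p.
Proof.
move=> HP; have [sp _ _] := HP.
have [hk0 bk0 nb cA [[ka Hka Aa] [kl Hkl Al]]] := inP_facts HP.
set k0 := find isBack p in hk0 bk0 nb Hka Hkl.
have HH : Hp p = k0.+3 by [].
set H := Hp p in HH.
set P := (fun k => armstep (nth stE p k)).
set I := iota 0 (size p).
set SA := map (eH H) (filter P I).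
set M := map (eH H) (filter (fun k => ~~ armstep (nth stE p k)) I).
have EA : armlist p = 1 :: SA by [].
have EL : leglist p = 1 :: M by [].
have sSA : size SA = n.+1 by have := size_armlist p; rewrite EA cA /=; case.
have sM : size M = n.+1.
  have := size_leglist p; rewrite EL /= => -[->].
  have := count_predC armstep p; rewrite cA sp; lia.
have [l1 [D [EM sD]]] : exists l1 D, M = l1 :: D /\ size D = n.
  by case EM0 : M sM => [|l1 D] //= [sD]; exists l1, D.
have ET : tab p = (1 :: SA) :: [:: l1; H] :: map (fun x => [:: x]) D.
  by rewrite /tab EA EL EM /= drop0.
have H2 : 2 <= H by rewrite HH.
have HN : H <= (size p).+2 by rewrite HH; lia.
have SSA : sorted ltn (1 :: SA) by apply: sorted_eHmap.
have SM : sorted ltn (1 :: l1 :: D) by rewrite -EM; apply: sorted_eHmap.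
have l1M : l1 \in M by rewrite EM in_cons eqxx.
have l12 : 2 <= l1 by move: l1M => /mapP [k _ ->]; apply: eH_ge2.
have l1H : l1 < H.
  have : eH H kl \in M by apply: map_f; rewrite mem_filter Al mem_iota /=; lia.
  rewrite EM => /(sorted_head (path_sorted SM)).
  rewrite /eH; have -> : kl.+3 <= H by rewrite HH; lia.
  lia.
have [s0 [S' ESA]] : exists s0 S', SA = s0 :: S' by case ES0 : SA sSA => [|s0 S'] // _; exists s0, S'.
have s0H : s0 < H.
  have : eH H ka \in SA by apply: map_f; rewrite mem_filter /P Aa mem_iota /=; lia.
  have SS : sorted ltn (s0 :: S') by rewrite -ESA; exact: (path_sorted SSA).
  rewrite ESA => /(sorted_head SS).
  rewrite /eH; have -> : ka.+3 <= H by rewrite HH; lia.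
  rewrite HH in H2 HN *; lia.
have sumT : sumn (theta n) = (2*n).+4 by rewrite /theta /= sumn_nseq; lia.
have PERM : perm_eq (flatten (tab p)) (iota 1 (sumn (theta n))).
  apply: (@perm_trans _ (1 :: H :: map (eH H) I)).
    apply/permP => a.
    have pm : perm_eq (SA ++ M) (map (eH H) I).
      rewrite /SA /M -map_cat; apply: perm_map.
      by have := perm_filterC P I I; rewrite perm_refl.
    rewrite ET /= flatten1 -(permP pm) !count_cat EM /=; lia.
  apply: uniq_perm; first last.
  - move=> j; rewrite sumT mem_iota !in_cons -(filter_predT I) mem_eHmap //.
    rewrite /dH /I sp HH; case: (ltnP j k0.+3) => h1; case: (eqVneq j 1) => h2;
      case: (eqVneq j k0.+3) => h3 /=; lia.
  - exact: iota_uniq.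
  rewrite /= map_inj_uniq ?iota_uniq; last exact: (can_inj (@dHeH H)).
  rewrite !in_cons negb_or; apply/and3P; split => //.
  - apply/andP; split; first by apply/eqP; rewrite HH; lia.
    by apply/mapP => -[k _ E]; have := eH_ge2 H k; lia.
  - by apply/mapP => -[k _ E]; have := eH_neq H k; rewrite -E eqxx.
have SYT : is_SYT (theta n) (tab p).
  split => //.
  - by rewrite ET /= sSA map_size1 sD.
  - rewrite ET /= (SSA : path ltn 1 SA) l1H /= all_map.
    by apply/allP.
  move=> r c; rewrite ET /= size_map => Hr.
  have SLD : sorted ltn (l1 :: D) := path_sorted SM.
  case: r Hr => [|r] Hr.
    case: c => [|[|c]] //= _; try lia.
    by rewrite ESA.
  case: r Hr => [|r] Hr /=.
    rewrite (nth_map 0) ?sD /=; last lia.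
    case: c => // _.
    have := sorted_ltn_nth ltn_trans 0 SLD => /(_ 0 1).
    by apply; rewrite ?inE /= ?sD; lia.
  rewrite (nth_map 0) ?sD /=; last lia.
  case: c => // _.
  rewrite (nth_map 0) ?sD /=; last lia.
  have := sorted_ltn_nth ltn_trans 0 SLD => /(_ r.+1 r.+2).
  by apply; rewrite ?inE /= ?sD; lia.
split => //.
move: (SYT); rewrite ET => SYT'.
have s1 : size (1 :: SA) = n.+2 by rewrite /= sSA.
rewrite (xi_formula SYT' s1 sD).
rewrite -[RHS](mkseq_nth stE p) /mkseq sp; apply/eq_in_map => k; rewrite mem_iota => /andP[_ Hk].
have eA : (eH H k \in 1 :: SA) = P k.
  rewrite in_cons mem_eHmap // dHeH eH_ge2 eH_neq.
  have -> : (eH H k == 1) = false by apply/eqP; have := eH_ge2 H k; lia.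
  by rewrite /I sp Hk.
rewrite /enc eA /P; case: (eqVneq k.+3 H) => e.
  have -> : k = k0 by rewrite HH in e; lia.
  by case: (nth stE p k0) bk0.
have := nb k; rewrite sp => /(_ Hk).
have kk : k != k0 by apply/eqP => kk; rewrite kk HH eqxx in e.
by move=> /(_ kk); case: (nth stE p k).
Qed.

Theorem mainTheorem2 (n : nat) :
  (forall T, is_SYT (theta n) T -> in_P n (xi n T)) /\
  (forall T1 T2, is_SYT (theta n) T1 -> is_SYT (theta n) T2 ->
     xi n T1 = xi n T2 -> T1 = T2) /\
  (forall p, in_P n p -> exists T, is_SYT (theta n) T /\ xi n T = p).
Proof.
split; first exact: xi_inP.
split.
  by move=> T1 T2 H1 H2 E; rewrite -(tab_xi H1) -(tab_xi H2) E.
by move=> p Hp; exists (tab p); apply: surj.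
Qed.
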